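(* Let $G=(V,E,w_G)$ be a directed graph with non-negative integer edge weights, $n=|V|$, $s\in V$, and $1\le h\le n$ an integer. Let $C\subseteq V$ contain $s$ and, for every pair of nodes $u,v$ for which the shortest path from $u$ to $v$ in $G$ consists of exactly $\lceil h/2\rceil$ nodes, at least one node of one of these shortest paths. For each $x\in C$ let $\tilde d(x,\cdot)$ satisfy $\mathrm{dist}_G(x,v)\le \tilde d(x,v)\le 2\,\mathrm{dist}^h_G(x,v)$ for all $v\in V$. Let $H=(C,C^2,w_H)$ with $w_H(x,y)=\tilde d(x,y)$. Let $G'=(V,E\cup(\{s\}\times C),w_{G'})$ where $w_{G'}(u,v)=\mathrm{dist}_H(u,v)$ for $(u,v)\in(\{s\}\times C)\setminus E$, $w_{G'}(u,v)=2w_G(u,v)$ for $(u,v)\in E\setminus(\{s\}\times C)$, and $w_{G'}(u,v)=\min(\mathrm{dist}_H(u,v),2w_G(u,v))$ for $(u,v)\in E\cap(\{s\}\times C)$. Then for every node $v\in V$, $\mathrm{dist}^h_{G'}(s,v)=\mathrm{dist}_{G'}(s,v)$.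
   Context: For a weighted directed graph, $\mathrm{dist}(u,v)$ denotes the minimum weight of a directed path from $u$ to $v$. For an integer $h\ge1$, the $h$-hop distance $\mathrm{dist}^h(u,v)$ is the minimum weight among all directed paths from $u$ to $v$ with at most $h$ edges. *)

(* Defs.v *)
From mathcomp Require Import all_boot.
Set Implicit Arguments. Unset Strict Implicit. Unset Printing Implicit Defensive.

(* Extended naturals: [Some n] is the finite value n, [None] is +infinity. *)
Definition ext := option nat.

Definition eadd (a b : ext) : ext :=
  match a, b with Some x, Some y => Some (x + y) | _, _ => None end.

Definition ele (a b : ext) : bool :=
  match a, b with
  | _, None => true
  | None, Some _ => false
  | Some x, Some y => x <= y
  end.

Definition emin (a b : ext) : ext := if ele a b then a else b.

Definition edouble (a : ext) : ext :=
  match a with Some x => Some (2 * x) | None => None end.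

Section Graphs.
Variable V : finType.

(* p is (the sequence of vertices after u of) a directed simple path from u
   to v using edges of e; it has size p edges and size p + 1 nodes. *)
Definition is_path (e : rel V) (u v : V) (p : seq V) : bool :=
  [&& path e u p, last u p == v & uniq (u :: p)].

Definition pweight (w : V -> V -> ext) (u : V) (p : seq V) : ext :=
  \big[eadd/Some 0]_(xy <- zip (u :: p) p) w xy.1 xy.2.

Definition hdist (e : rel V) (w : V -> V -> ext) (h : nat) (u v : V) : ext :=
  \big[emin/None]_(k < h.+1)
     \big[emin/None]_(t : k.-tuple V | is_path e u v t) pweight w u t.

(* Distance: minimum weight of a directed path from u to v.  Every (simple)
   path has at most #|V| - 1 edges, so this ranges over all paths. *)
Definition dist (e : rel V) (w : V -> V -> ext) (u v : V) : ext :=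
  hdist e w #|V| u v.

Definition is_shortest (e : rel V) (w : V -> V -> ext) (u v : V) (p : seq V) :=
  is_path e u v p && (pweight w u p == dist e w u v).

End Graphs.

(* The graph H = (C, C^2, w_H) with w_H(x,y) = dt x y, as a graph on V whose
   edges are all pairs in C x C (paths in it stay inside C). *)
Definition H_edge (V : finType) (C : {set V}) : rel V :=
  fun x y => (x \in C) && (y \in C).

Definition G'_edge (V : finType) (E : rel V) (s : V) (C : {set V}) : rel V :=
  fun u v => E u v || ((u == s) && (v \in C)).

Definition G'_weight (V : finType) (E : rel V) (wG : V -> V -> nat) (s : V)
  (C : {set V}) (distH : V -> V -> ext) : V -> V -> ext :=
  fun u v =>
    if (u == s) && (v \in C) then
      (if E u v then emin (distH u v) (Some (2 * wG u v)) else distH u v)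
    else Some (2 * wG u v).

(* Main.v *)
Require Import Defs.
From mathcomp Require Import all_boot.
From mathcomp Require Import zify.
Set Implicit Arguments. Unset Strict Implicit. Unset Printing Implicit Defensive.

Lemma eaddA a b c : eadd a (eadd b c) = eadd (eadd a b) c.
Proof. by case: a; case: b; case: c => //= x y z; rewrite addnA. Qed.
Lemma eadd0 a : eadd a (Some 0) = a. Proof. by case: a => //= x; rewrite addn0. Qed.
Lemma ead0 a : eadd (Some 0) a = a. Proof. by case: a. Qed.
Lemma ele_refl a : ele a a. Proof. by case: a => //= x. Qed.
Lemma ele_None_r a : ele a None. Proof. by case: a. Qed.
Lemma ele_trans a b c : ele a b -> ele b c -> ele a c.
Proof. by move: a b c => [a|] [b|] [c|] //=; exact: leq_trans. Qed.
Lemma ele_add a b c d : ele a b -> ele c d -> ele (eadd a c) (eadd b d).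
Proof. by move: a b c d => [a|] [b|] [c|] [d|] //=; exact: leq_add. Qed.
Lemma ele_addl a b : ele b (eadd a b).
Proof. by move: a b => [a|] [b|] //=; exact: leq_addl. Qed.
Lemma ele_antisym a b : ele a b -> ele b a -> a = b.
Proof. by move: a b => [a|] [b|] //= h1 h2; congr Some; apply/eqP; rewrite eqn_leq h1 h2. Qed.
Lemma ele_eminl a b : ele (emin a b) a.
Proof.
rewrite /emin; case: ifP => H; first exact: ele_refl.
by move: a b H => [a|] [b|] //= /negbT; rewrite -ltnNge => /ltnW.
Qed.
Lemma ele_eminr a b : ele (emin a b) b.
Proof. by rewrite /emin; case: ifP => // _; exact: ele_refl. Qed.
Lemma ele_double a b : ele a b -> ele (edouble a) (edouble b).
Proof. by move: a b => [a|] [b|] //=; rewrite leq_mul2l orbC => ->. Qed.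

Lemma bigmin_le (I : eqType) (r : seq I) (P : pred I) (F : I -> ext) j :
  j \in r -> P j -> ele (\big[emin/None]_(i <- r | P i) F i) (F j).
Proof.
elim: r => // a r IH; rewrite inE big_cons => /orP [/eqP -> | jr] Pj.
  by rewrite Pj; exact: ele_eminl.
case: ifP => _; last exact: IH.
exact: ele_trans (ele_eminr _ _) (IH jr Pj).
Qed.

Lemma bigmin_att (I : Type) (r : seq I) (P : pred I) (F : I -> ext) :
  \big[emin/None]_(i <- r | P i) F i = None \/
  exists2 i, P i & \big[emin/None]_(i <- r | P i) F i = F i.
Proof.
elim: r => [|a r IH]; first by left; rewrite big_nil.
rewrite big_cons; case: ifP => Pa //.
rewrite /emin; case: ifP => _; first by right; exists a.
exact: IH.
Qed.

Section G.
Variables (V : finType) (e : rel V) (w : V -> V -> ext).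

Lemma pweight_nil u : pweight w u [::] = Some 0. Proof. by rewrite /pweight big_nil. Qed.
Lemma pweight_cons u a p : pweight w u (a :: p) = eadd (w u a) (pweight w a p).
Proof. by rewrite /pweight /= big_cons. Qed.
Lemma pweight_cat u p q :
  pweight w u (p ++ q) = eadd (pweight w u p) (pweight w (last u p) q).
Proof.
elim: p u => [|a p IH] u /=; first by rewrite pweight_nil ead0.
by rewrite !pweight_cons IH eaddA.
Qed.

Lemma hdist_le h u v p : is_path e u v p -> size p <= h ->
  ele (hdist e w h u v) (pweight w u p).
Proof.
move=> Hp Hs; rewrite /hdist.
have Hk : size p < h.+1 by [].
have H1 := @bigmin_le _ (index_enum 'I_h.+1) (fun _ => true)
  (fun k : 'I_h.+1 => \big[emin/None]_(t : k.-tuple V | is_path e u v t) pweight w u t)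
  (Ordinal Hk) (mem_index_enum _) isT.
apply: ele_trans H1 _.
exact: (@bigmin_le _ (index_enum ((size p).-tuple V)) (fun t : (size p).-tuple V => is_path e u v t)
  (fun t : (size p).-tuple V => pweight w u t) (in_tuple p) (mem_index_enum _) Hp).
Qed.

Lemma hdist_att h u v : hdist e w h u v = None \/
  exists p, [/\ is_path e u v p, size p <= h & hdist e w h u v = pweight w u p].
Proof.
rewrite /hdist.
have [->|[k _ ->]] := bigmin_att (index_enum 'I_h.+1) (fun _ => true)
  (fun k : 'I_h.+1 => \big[emin/None]_(t : k.-tuple V | is_path e u v t) pweight w u t).
  by left.
have [->|[t Ht ->]] := bigmin_att (index_enum (k.-tuple V))
   (fun t : k.-tuple V => is_path e u v t) (fun t : k.-tuple V => pweight w u t).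
  by left.
by right; exists t; split => //; rewrite size_tuple -ltnS.
Qed.

Lemma uniq_size (u : V) p : uniq (u :: p) -> size p <= #|V|.
Proof.
move/card_uniqP => H.
have : size (u :: p) <= #|V| by rewrite -H max_card.
by move=> /ltnW.
Qed.

Lemma shorten_walk n (u : V) p : size p <= n -> path e u p ->
  exists q, [/\ path e u q, last u q = last u p, uniq (u :: q), size q <= size p &
     ele (pweight w u q) (pweight w u p)] /\ {subset q <= p}.
Proof.
elim: n u p => [|n IH] u p.
  by rewrite leqn0 => /nilP -> _; exists [::]; do ! split => //=; exact: ele_refl.
move=> Hs Hp.
have [up|nup] := boolP (u \in p).
  move: Hs Hp; case/splitPr: up => p1 p2 Hs Hp.
  have Hp2 : path e u p2.
    by move: Hp; rewrite -cat_rcons cat_path last_rcons => /andP[].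
  have Hs2 : size p2 <= n.
    by move: Hs; rewrite size_cat /= addnS ltnS; apply: leq_trans; exact: leq_addl.
  have [q [[q1 q2 q3 q4 q6] q5]] := IH u p2 Hs2 Hp2.
  exists q; split; last by move=> x /q5 xp2; rewrite mem_cat inE xp2 !orbT.
  split => //.
  - by rewrite q2 last_cat.
  - by rewrite size_cat /= (leq_trans q4) // -addSnnS leq_addl.
  - rewrite -cat_rcons pweight_cat last_rcons; apply: ele_trans q6 _; exact: ele_addl.
case: p Hs Hp nup => [|a p'] Hs Hp nup.
  by exists [::]; do ! split => //=; exact: ele_refl.
move: Hp => /= /andP [ua Hp'].
have [q [[q1 q2 q3 q4 q6] q5]] := IH a p' Hs Hp'.
exists (a :: q); split; last first.
  by move=> x; rewrite !inE => /orP [->|/q5 ->]; rewrite ?orbT.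
split => //=.
- by rewrite ua q1.
- move: q3 => /= /andP [-> ->]; rewrite !andbT; apply/negP => uq; move/negP: nup; apply.
  by move: uq; rewrite !inE => /orP [->|/q5 ->]; rewrite ?orbT.
- by rewrite !pweight_cons; apply: ele_add q6; exact: ele_refl.
Qed.

End G.

Section Main.
Variables (V : finType) (E : rel V) (wG : V -> V -> nat) (s : V) (h : nat)
  (C : {set V}) (dt : V -> V -> ext).
Hypothesis Hh : 1 <= h <= #|V|.
Hypothesis HsC : s \in C.
Hypothesis Hcov : forall u v : V,
     (exists p : seq V, is_shortest E (fun x y => Some (wG x y)) u v p
                        /\ size (u :: p) = uphalf h) ->
     exists p : seq V, [/\ is_shortest E (fun x y => Some (wG x y)) u v p,
                           size (u :: p) = uphalf h &
                           has (fun z => z \in C) (u :: p)].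
Hypothesis Hdt : forall x, x \in C -> forall v : V,
     ele (dist E (fun x y => Some (wG x y)) x v) (dt x v) /\
     ele (dt x v) (edouble (hdist E (fun x y => Some (wG x y)) h x v)).

Local Notation weG := (fun x y => Some (wG x y)).
Local Notation distH := (dist (H_edge C) dt).
Local Notation E' := (G'_edge E s C).
Local Notation w' := (G'_weight E wG s C distH).

Fixpoint nw (u : V) (p : seq V) : nat :=
  if p is a :: p' then wG u a + nw a p' else 0.

Lemma pweightG u p : pweight weG u p = Some (nw u p).
Proof.
elim: p u => [|a p IH] u; first by rewrite pweight_nil.
by rewrite pweight_cons IH.
Qed.

Lemma nw_cat u p q : nw u (p ++ q) = nw u p + nw (last u p) q.
Proof. by elim: p u => [|a p IH] u //=; rewrite IH addnA. Qed.

Definition opt x v Q := forall W, path E x W -> last x W = v -> nw x Q <= nw x W.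

Lemma shortest_opt x v Q : is_shortest E weG x v Q -> opt x v Q.
Proof.
case/andP => _ /eqP Hd W HW HWl.
have [P [[P1 P2 P3 _ P6] _]] := shorten_walk weG (leqnn _) HW.
have HP : is_path E x v P by rewrite /is_path P1 P2 HWl eqxx P3.
have H1 := hdist_le weG HP (uniq_size P3).
rewrite -/(dist E weG x v) -Hd !pweightG /= in H1.
rewrite !pweightG /= in P6.
exact: leq_trans H1 P6.
Qed.

Lemma opt_shortest x v Q : is_path E x v Q -> opt x v Q -> is_shortest E weG x v Q.
Proof.
move=> HQ HoQ; rewrite /is_shortest HQ /=.
have H1 := hdist_le weG HQ (uniq_size (let: And3 _ _ U := and3P HQ in U)).
case: (hdist_att E weG #|V| x v) => [Hn | [P [HP _ Heq]]].
  by rewrite Hn pweightG in H1.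
apply/eqP; rewrite /dist Heq; apply: ele_antisym; last by rewrite -Heq.
case/and3P: HP => HP1 /eqP HP2 _.
rewrite !pweightG /=; exact: HoQ.
Qed.

Lemma exists_opt x v W : path E x W -> last x W = v ->
  exists Q, [/\ is_path E x v Q, opt x v Q & nw x Q <= nw x W].
Proof.
move=> HW HWl.
have [P [[P1 P2 P3 _ P6] _]] := shorten_walk weG (leqnn _) HW.
have HP : is_path E x v P by rewrite /is_path P1 P2 HWl eqxx P3.
have H1 := hdist_le weG HP (uniq_size P3).
case: (hdist_att E weG #|V| x v) => [Hn | [Q [HQ _ Heq]]].
  by rewrite Hn pweightG in H1.
exists Q; split => //.
  by apply: shortest_opt; rewrite /is_shortest HQ /dist Heq eqxx.
rewrite Heq !pweightG /= in H1.
rewrite !pweightG /= in P6.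
exact: leq_trans H1 P6.
Qed.

Lemma opt_catl x v A B : path E x (A ++ B) -> last x (A ++ B) = v ->
  opt x v (A ++ B) -> opt x (last x A) A.
Proof.
move=> HP HL Ho W HW HWl.
have := Ho (W ++ B).
rewrite cat_path HW HWl; move: HP; rewrite cat_path => /andP [_ ->].
rewrite last_cat HWl -last_cat HL => /(_ isT erefl).
by rewrite !nw_cat HWl leq_add2r.
Qed.

Lemma opt_catr x v A B : path E x (A ++ B) -> last x (A ++ B) = v ->
  opt x v (A ++ B) -> opt (last x A) v B.
Proof.
move=> HP HL Ho W HW HWl.
have := Ho (A ++ W).
rewrite cat_path HW; move: HP; rewrite cat_path => /andP [-> _].
rewrite last_cat HWl => /(_ isT erefl).
by rewrite !nw_cat leq_add2l.
Qed.

Lemma w'E a b : E a b -> ele (w' a b) (Some (2 * wG a b)).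
Proof.
move=> Eab; rewrite /G'_weight; case: ifP => _; last exact: ele_refl.
by rewrite Eab; exact: ele_eminr.
Qed.

Lemma w'C x : x \in C -> ele (w' s x) (distH s x).
Proof.
move=> xC; rewrite /G'_weight eqxx xC /=.
by case: (E s x); [exact: ele_eminl | exact: ele_refl].
Qed.

Lemma pathE' u p : path E u p -> path E' u p.
Proof. by apply: sub_path => a b; rewrite /G'_edge => ->. Qed.

Lemma pweight'E u p : path E u p -> ele (pweight w' u p) (Some (2 * nw u p)).
Proof.
elim: p u => [|a p IH] u /=; first by rewrite pweight_nil.
case/andP => Eua Hp; rewrite pweight_cons mulnDr.
exact: ele_add (w'E Eua) (IH _ Hp).
Qed.

Lemma triH x y : x \in C -> y \in C -> ele (distH s y) (eadd (distH s x) (dt x y)).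
Proof.
move=> xC yC.
case: (hdist_att (H_edge C) dt #|V| s x) => [Hn|[p [Hp _ Heq]]].
  by rewrite /dist Hn; exact: ele_None_r.
case/and3P: Hp => Hp1 /eqP Hp2 _.
have Hw : path (H_edge C) s (rcons p y) by rewrite rcons_path Hp1 Hp2 /H_edge xC yC.
have [q [[q1 q2 q3 _ q6] _]] := shorten_walk dt (leqnn _) Hw.
have Hq : is_path (H_edge C) s y q by rewrite /is_path q1 q2 last_rcons eqxx q3.
apply: ele_trans (hdist_le dt Hq (uniq_size q3)) _.
apply: ele_trans q6 _.
rewrite /dist Heq -cats1 pweight_cat pweight_cons pweight_nil eadd0 Hp2.
exact: ele_refl.
Qed.

Lemma distHss : ele (distH s s) (Some 0).
Proof.
have Hp : is_path (H_edge C) s s [::] by apply/and3P; split => //=.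
have := hdist_le dt Hp (leq0n #|V|); rewrite pweight_nil; exact.
Qed.

Lemma k_le_h : uphalf h <= h.
Proof. by rewrite leq_uphalf_double -addnn leq_addr. Qed.

Lemma k_gt0 : 0 < uphalf h.
Proof. by case/andP: Hh; case: h. Qed.

Lemma Base x v Q : size Q < uphalf h -> x \in C -> is_path E x v Q ->
  ele (hdist E' w' h s v) (eadd (distH s x) (Some (2 * nw x Q))).
Proof.
move=> Hs xC /and3P [HQ1 /eqP HQ2 _].
have Hw : path E' s (x :: Q).
  by rewrite /= {1}/G'_edge eqxx xC orbT /= pathE'.
have [P [[P1 P2 P3 P4 P6] _]] := shorten_walk w' (leqnn _) Hw.
have HP : is_path E' s v P by rewrite /is_path P1 P3 P2 /= HQ2 eqxx.
have HPs : size P <= h by apply: leq_trans P4 (leq_trans Hs k_le_h).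
apply: ele_trans (hdist_le w' HP HPs) _.
apply: ele_trans P6 _.
rewrite pweight_cons; apply: ele_add (w'C xC) (pweight'E HQ1).
Qed.


Lemma Lmain n : forall x v Q, size Q <= n -> x \in C -> is_path E x v Q -> opt x v Q ->
  ele (hdist E' w' h s v) (eadd (distH s x) (Some (2 * nw x Q))).
Proof.
elim: n => [|n IH] x v Q Hs xC HQ HoQ.
  by apply: Base => //; apply: leq_ltn_trans Hs k_gt0.
case: (ltnP (size Q) (uphalf h)) => Hk; first exact: Base.
have HsA0 := size_takel Hk.
case HA: (take (uphalf h) Q) HsA0 => [|q1 A'] HsA.
  by move: k_gt0; rewrite -HsA.
have EQ : Q = (q1 :: A') ++ drop (uphalf h) Q by rewrite -HA cat_take_drop.
move: (drop (uphalf h) Q) EQ => B EQ.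
clear HA; subst Q.
case/and3P: (HQ) => HQ1 /eqP HQ2 HQ3.
have /andP [Exq1 Hq1] : E x q1 && path E q1 (A' ++ B) := HQ1.
have Hlq1 : last q1 (A' ++ B) = v := HQ2.
have Ho1 : opt q1 v (A' ++ B) := @opt_catr x v [:: q1] (A' ++ B) HQ1 HQ2 HoQ.
set qk := last q1 A'.
have Ho2 : opt q1 qk A' := opt_catl Hq1 Hlq1 Ho1.
have HA'1 : path E q1 A' by move: Hq1; rewrite cat_path => /andP [-> _].
have HqkB : path E qk B by move: Hq1; rewrite cat_path => /andP [_ ->].
have U : uniq (q1 :: A').
  by move: HQ3; rewrite cons_uniq => /andP [_]; rewrite cat_uniq => /and3P [].
have HA'p : is_path E q1 qk A' by rewrite /is_path HA'1 eqxx U.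
have HAsh : is_shortest E weG q1 qk A' := opt_shortest HA'p Ho2.
have [R [HR HRs HRC]] := Hcov (ex_intro _ A' (conj HAsh HsA)).
case/hasP: HRC => y yR yC.
have HRo := shortest_opt HR.
case/andP: HR => /and3P [HR1 /eqP HR2 HR3] _.
move: HR1 HR2 HR3 HRo HRs; case/splitPl: yR => R1 R2 Hy HR1 HR2 HR3 HRo HRs.
have Heqw : nw q1 (R1 ++ R2) = nw q1 A'.
  by apply/eqP; rewrite eqn_leq (HRo A' HA'1 erefl) (Ho2 _ HR1 HR2).
have HR1a : path E q1 R1 by move: HR1; rewrite cat_path => /andP [-> _].
have HR2a : path E y R2 by move: HR1; rewrite cat_path Hy => /andP [_ ->].
have Hl2 : last y R2 = qk by rewrite -Hy -last_cat.
have HW : path E y (R2 ++ B) by rewrite cat_path HR2a Hl2 HqkB.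
have HWl : last y (R2 ++ B) = v by rewrite last_cat Hl2 -Hlq1 last_cat.
have HoW : forall W, path E y W -> last y W = v -> nw y (R2 ++ B) <= nw y W.
  move=> W HW1 HW2.
  have := Ho1 (R1 ++ W).
  rewrite cat_path HR1a Hy HW1 last_cat Hy HW2 => /(_ isT erefl).
  rewrite nw_cat -/qk -Heqw !nw_cat Hy Hl2 -addnA leq_add2l; exact.
have [P [[P1 P2 P3 P4 P6] _]] := shorten_walk weG (leqnn _) HW.
rewrite !pweightG /= in P6.
have HP : is_path E y v P by rewrite /is_path P1 P3 P2 HWl eqxx.
have HoP : opt y v P by move=> W HW1 HW2; apply: leq_trans P6 (HoW W HW1 HW2).
have HPs : size P <= n.
  apply: leq_trans P4 _.
  move: Hs HRs HsA; rewrite /= !size_cat /= => Hs' HRs' HsA'.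
  clear -Hs' HRs' HsA'; lia.
have IHy := IH y v P HPs yC HP HoP.
have HX : path E x (q1 :: R1) by rewrite /= Exq1 HR1a.
have [P' [[P'1 P'2 P'3 P'4 P'6] _]] := shorten_walk weG (leqnn _) HX.
rewrite !pweightG /= in P'6.
have HP' : is_path E x y P' by rewrite /is_path P'1 P'3 P'2 /= Hy eqxx.
have HP's : size P' <= h.
  apply: leq_trans P'4 _; apply: leq_trans k_le_h.
  by move: HRs; rewrite /= size_cat => <-; rewrite ltnS leq_addr.
have Hhd : ele (hdist E weG h x y) (Some (nw x (q1 :: R1))).
  apply: ele_trans (hdist_le weG HP' HP's) _; rewrite pweightG; exact: P'6.
have Hdxy : ele (dt x y) (Some (2 * nw x (q1 :: R1))) :=
  ele_trans (Hdt xC y).2 (ele_double Hhd).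
have Hsum : nw x (q1 :: R1) + nw y P <= nw x ((q1 :: A') ++ B).
  rewrite /= -addnA leq_add2l.
  apply: leq_trans (leq_add (leqnn _) P6) _.
  by rewrite [nw q1 (A' ++ B)]nw_cat -/qk -Heqw !nw_cat Hy Hl2 addnA.
apply: ele_trans IHy _.
apply: ele_trans (ele_add (ele_trans (triH xC yC) (ele_add (ele_refl _) Hdxy))
   (ele_refl (Some (2 * nw y P)))) _.
rewrite -eaddA; apply: ele_add (ele_refl _) _.
by rewrite /= -mulnDr leq_mul2l Hsum orbT.
Qed.

Lemma avoid u p : s \notin (u :: p) -> path E' u p ->
  path E u p /\ pweight w' u p = Some (2 * nw u p).
Proof.
elim: p u => [|a p IH] u; first by rewrite pweight_nil.
rewrite inE negb_or => /andP [su Hs] /= /andP [Hua Hp].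
have [Hp' Hw] := IH a Hs Hp.
have us : (u == s) = false by apply/negbTE; rewrite eq_sym.
have Eua : E u a by move: Hua; rewrite /G'_edge us /= orbF.
split; first by rewrite Eua Hp'.
by rewrite pweight_cons Hw /G'_weight us /= mulnDr.
Qed.

Lemma final v : hdist E' w' h s v = dist E' w' s v.
Proof.
case/andP: Hh => h1 hV.
apply: ele_antisym; last first.
  case: (hdist_att E' w' h s v) => [->|[P [HP HPs ->]]]; first exact: ele_None_r.
  exact: hdist_le HP (leq_trans HPs hV).
rewrite /dist.
case: (hdist_att E' w' #|V| s v) => [->|[P [HP _ ->]]]; first exact: ele_None_r.
case: P HP => [|p1 P'] HP.
  exact: hdist_le HP (leq0n _).
case/and3P: HP => /= /andP [Esp1 HP'] /eqP HPl /andP [HPu _].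
have [HPE HPw] := avoid HPu HP'.
rewrite pweight_cons HPw.
have caseC : p1 \in C ->
    ele (hdist E' w' h s v) (eadd (distH s p1) (Some (2 * nw p1 P'))).
  move=> p1C; have [Q [HQ HoQ HQw]] := exists_opt HPE HPl.
  apply: ele_trans (Lmain (leqnn _) p1C HQ HoQ) _.
  by apply: ele_add (ele_refl _) _; rewrite /= leq_mul2l HQw orbT.
have caseS : E s p1 ->
    ele (hdist E' w' h s v) (Some (2 * wG s p1 + 2 * nw p1 P')).
  move=> Esp; have HW : path E s (p1 :: P') by rewrite /= Esp HPE.
  have [Q [HQ HoQ HQw]] := exists_opt HW HPl.
  apply: ele_trans (Lmain (leqnn _) HsC HQ HoQ) _.
  apply: ele_trans (ele_add distHss (ele_refl _)) _.
  by rewrite /= -mulnDr leq_mul2l HQw orbT.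
rewrite [G'_weight _ _ _ _ _ s p1]/G'_weight eqxx /=.
case: ifP => p1C.
  case: ifP => Esp; last exact: caseC p1C.
  rewrite /emin; case: ifP => _; [exact: caseC | exact: caseS].
have Esp : E s p1 by move: Esp1; rewrite /G'_edge p1C eqxx /= orbF.
exact: caseS.
Qed.

End Main.

Theorem lemma3p3 (V : finType) (E : rel V) (wG : V -> V -> nat) (s : V)
  (h : nat) (C : {set V}) (dt : V -> V -> ext) :
  1 <= h <= #|V| ->
  s \in C ->
  (forall u v : V,
     (exists p : seq V, is_shortest E (fun x y => Some (wG x y)) u v p
                        /\ size (u :: p) = uphalf h) ->
     exists p : seq V, [/\ is_shortest E (fun x y => Some (wG x y)) u v p,
                           size (u :: p) = uphalf h &
                           has (fun z => z \in C) (u :: p)]) ->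
  (forall x, x \in C -> forall v : V,
     ele (dist E (fun x y => Some (wG x y)) x v) (dt x v) /\
     ele (dt x v) (edouble (hdist E (fun x y => Some (wG x y)) h x v))) ->
  let distH := dist (H_edge C) dt in
  let E' := G'_edge E s C in
  let w' := G'_weight E wG s C distH in
  forall v : V, hdist E' w' h s v = dist E' w' s v.
Proof.
move=> Hh HsC Hcov Hdt distH E' w' v.
exact: (final Hh HsC Hcov Hdt v).
Qed.
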